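(* Let $X$ and $\Theta$ be compact metric spaces, $\tau:\Theta\times X\to X$, $(\theta,x)\mapsto\tau_\theta(x)$, continuous, $\Omega=X\times\Theta$, and $\mathcal{H}$ the set of holonomic Borel probability measures on $\Omega$, i.e. those $\hat\nu$ with $\int_\Omega [f(\tau_\theta(x))-f(x)]\,d\hat\nu(x,\theta)=0$ for all $f\in C(X,\mathbb{R})$; for $\hat\nu\in\mathcal{H}$ write $\nu=\pi_*\hat\nu$ for its marginal on $X$ ($\pi:\Omega\to X$ the projection). Let $\mu$ be a Borel probability on $\Theta$, let $\psi:X\to\mathbb{R}$ be a positive continuous function, let $dq_x(\theta)=\psi(\tau_\theta(x))\,d\mu(\theta)$, and $B_q(g)(x)=\int_\Theta g(\tau_\theta(x))\,dq_x(\theta)$, $B_\mu(g)(x)=\int_\Theta g(\tau_\theta(x))\,d\mu(\theta)$. Define the topological pressure \[ P(\psi)=\sup_{\hat\nu\in\mathcal{H}}\ \inf_{g\in C(X,\mathbb{R}),\,g>0}\int_X\ln\frac{B_q(g)}{g}\,d\nu, \] and the variational entropy $h_v(\hat\nu)=\inf_{g\in C(X,\mathbb{R}),\,g>0}\int_X\ln\frac{B_\mu(g)}{g}\,d\nu$. Then \[ P(\psi)=\sup_{\hat\nu\in\mathcal{H}}\Big\{h_v(\hat\nu)+\int_X\log\psi\,d\nu\Big\}. \] *)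

(* Defs.v *)
From HB Require Import structures.
From mathcomp Require Import all_boot all_order all_algebra.
From mathcomp Require Import all_classical all_reals all_analysis.
Set Implicit Arguments. Unset Strict Implicit. Unset Printing Implicit Defensive.
Import Order.TTheory GRing.Theory Num.Theory.
Import numFieldNormedType.Exports.
Local Open Scope classical_set_scope.
Local Open Scope ring_scope.

Definition Borel {R : realType} (T : pseudoPMetricType R) :=
  g_sigma_algebraType (@open T).

Section defs.
Context {R : realType} {X Th : pseudoPMetricType R}.

Definition Omega := (Borel X * Borel Th)%type.

Definition holonomic (tau : Th -> X -> X) : set (probability Omega R) :=
  [set nuhat | forall f : X -> R, continuous f ->
     (integral nuhat setT (fun z : Omega => (f (tau z.2 z.1) - f z.1)%:E) = 0)%E].

Definition marg (nuhat : probability Omega R) : set (Borel X) -> \bar R :=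
  pushforward nuhat (fun z : Omega => z.1).

Definition Bmu (tau : Th -> X -> X) (mu : probability (Borel Th) R)
  (g : X -> R) (x : X) : R :=
  fine (\int[mu]_th (g (tau th x))%:E).

(* B_q(g)(x) = int_Theta g(tau_theta x) dq_x(theta),
   where dq_x(theta) = psi(tau_theta x) dmu(theta) *)
Definition Bq (tau : Th -> X -> X) (mu : probability (Borel Th) R)
  (psi : X -> R) (g : X -> R) (x : X) : R :=
  fine (\int[mu]_th (g (tau th x) * psi (tau th x))%:E).

Definition poscont : set (X -> R) :=
  [set g : X -> R | continuous g /\ forall x : X, 0 < g x].

Definition inf_ln (B : (X -> R) -> X -> R) (nuhat : probability Omega R)
  : \bar R :=
  ereal_inf [set (\int[marg nuhat]_x (ln (B g x / g x))%:E)%E | g in poscont].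

Definition pressure (tau : Th -> X -> X) (mu : probability (Borel Th) R)
  (psi : X -> R) : \bar R :=
  ereal_sup [set inf_ln (Bq tau mu psi) nuhat | nuhat in holonomic tau].

Definition hv (tau : Th -> X -> X) (mu : probability (Borel Th) R)
  (nuhat : probability Omega R) : \bar R :=
  inf_ln (Bmu tau mu) nuhat.

End defs.

(* Main.v *)
Require Import Defs.
From HB Require Import structures.
From mathcomp Require Import all_boot all_order all_algebra.
From mathcomp Require Import all_classical all_reals all_analysis.
From mathcomp Require Import measurable_realfun.
From mathcomp Require Import ring lra.
Import Order.TTheory GRing.Theory Num.Theory.
Import numFieldNormedType.Exports.
Local Open Scope classical_set_scope.
Local Open Scope ring_scope.
Section gen.
Context {R : realType}.

Lemma cont_meas (T : pseudoPMetricType R) (f : T -> R) :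
  continuous f -> measurable_fun [set: Borel T] (f : Borel T -> R).
Proof.
move=> /continuousP cf; apply: (measurability _ (RGenOpens.measurableE R)).
move=> _ [_ [a [b ->] <-]]; rewrite setTI.
apply: sub_sigma_algebra; exact/cf/interval_open.
Qed.

Lemma cbound (T : pseudoPMetricType R) (f : T -> R) :
  compact [set: T] -> continuous f -> exists M, forall x, `|f x| <= M.
Proof.
move=> cT cf.
have [c _ Hc] := @compact_EVT_max T R (fun x => `|f x|) setT
   (ex_intro _ point I) cT
   (continuous_subspaceT (fun x => continuous_comp (cf x) (@norm_continuous _ R^o (f x)))).
by exists `|f c| => x; apply: Hc; rewrite inE.
Qed.

Lemma cposmin (T : pseudoPMetricType R) (f : T -> R) :
  compact [set: T] -> continuous f -> (forall x, 0 < f x) ->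
  exists2 m, 0 < m & forall x, m <= f x.
Proof.
move=> cT cf fp.
have [c _ Hc] := @compact_EVT_min T R f setT
   (ex_intro _ point I) cT (continuous_subspaceT cf).
by exists (f c) => // x; apply: Hc; rewrite inE.
Qed.

Lemma bdd_int d (T : measurableType d) (P : probability T R) (g : T -> R) :
  measurable_fun setT g -> (exists M, forall x, `|g x| <= M) ->
  P.-integrable setT (EFin \o g).
Proof.
move=> mg [M HM]; apply: measurable_bounded_integrable => //.
  by move: (probability_setT P) => /= ->; rewrite ltry.
exists M; split; first by rewrite num_real.
move=> y My x _ /=; apply: le_trans (HM x) _; exact: ltW.
Qed.

End gen.

Section main.
Context {R : realType} {X Th : pseudoPMetricType R}.
Variables (compX : compact [set: X]) (compTh : compact [set: Th]).
Variables (tau : Th -> X -> X)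
  (ctau : continuous (fun p : Th * X => tau p.1 p.2))
  (mu : probability (Borel Th) R).

Lemma contG (h : X -> R) x : continuous h -> continuous (fun th => h (tau th x)).
Proof.
move=> ch th.
have c1 : {for th, continuous (fun t : Th => (t, x))}.
  by apply: cvg_pair; [exact: cvg_id | exact: cvg_cst].
have := continuous_comp c1 (ctau (th, x)).
move=> c2; exact: (continuous_comp c2 (ch _)).
Qed.

Lemma Gint (h : X -> R) x : continuous h ->
  mu.-integrable setT (EFin \o (fun th => h (tau th x))).
Proof.
move=> ch; apply: bdd_int. exact: (@cont_meas R Th _ (contG _ x ch)).
exact: cbound _ compTh (contG _ x ch).
Qed.

Lemma Bmu_fin (h : X -> R) x : continuous h ->
  (\int[mu]_th (h (tau th x))%:E)%E = (Bmu tau mu h x)%:E.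
Proof.
move=> ch; rewrite /Bmu fineK //.
exact: (integrable_fin_num _ (Gint _ x ch)).
Qed.


Lemma Bmu_pos (h : X -> R) x : continuous h -> (forall y, 0 < h y) ->
  0 < Bmu tau mu h x.
Proof.
move=> ch hp.
have [m m0 Hm] := @cposmin _ _ _ compTh (contG _ x ch) (fun th => hp _).
rewrite -lte_fin -Bmu_fin //.
have H : (\int[mu]_th (fun _ => m%:E) th <= \int[mu]_th (h (tau th x))%:E)%E.
  apply: le_integral => //.
  - apply: (@bdd_int _ _ _ _ (fun _ => m)) => //.
    by exists `|m|.
  - exact: Gint.
  - by move=> th _; rewrite lee_fin.
apply: lt_le_trans H; rewrite integral_cst //.
by move: (probability_setT mu) => /= ->; rewrite mule1 lte_fin.
Qed.


Lemma tube (h : X -> R) x0 e : continuous h -> 0 < e ->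
  \forall x \near x0, forall th, `|h (tau th x0) - h (tau th x)| < e.
Proof.
move=> ch e0.
pose F := fun p : Th * X => h (tau p.1 p.2).
have cF : continuous F.
  move=> p; exact: (continuous_comp (ctau p) (ch _)).
suff : \forall x \near x0,
    [set: Th] `<=` (fun th => `|h (tau th x0) - h (tau th x)| < e).
  by apply: filterS => x H th; exact: H.
apply: ((proj1 (compact_near_coveringP [set: Th]) compTh) X (nbhs x0)
  (fun x th => `|h (tau th x0) - h (tau th x)| < e)) => th _.
have := cF (th, x0); move/cvgrPdist_lt => /(_ (e/2)).
have e20 : 0 < e / 2 by rewrite divr_gt0.
move=> /(_ e20) [[A B] /= [nA nB] sub].
exists (A, B) => //= -[th' x] /= [Ath Bx].
have h1 := sub (th', x) (conj Ath Bx).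
have h2 := sub (th', x0) (conj Ath (nbhs_singleton nB)).
rewrite /F /= in h1 h2.
rewrite (splitr e).
apply: le_lt_trans (ler_distD (h (tau th x0)) _ _) _.
rewrite distrC; exact: ltrD.
Qed.


Lemma Bmu_cont (h : X -> R) : continuous h -> continuous (Bmu tau mu h).
Proof.
move=> ch x0; apply/cvgrPdist_lt => e e0.
have e20 : 0 < e / 2 by rewrite divr_gt0.
near=> x.
have T := near (@tube h x0 (e/2) ch e20) x.
apply: (@le_lt_trans _ _ (e / 2)); last by rewrite ltr_pdivrMr // ltr_pMr // ltr1n.
rewrite -lee_fin -abse_EFin EFinB -!Bmu_fin // -integralB_EFin //; try exact: Gint.
under eq_integral do rewrite -EFinB.
have mB : measurable_fun [set: Borel Th]
    (fun th => h (tau th x0) - h (tau th x)).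
  apply: measurable_funB; exact: cont_meas (contG _ _ ch).
apply: le_trans (le_abse_integral mu measurableT _) _.
  exact/measurable_EFinP.
apply: le_trans (integral_le_bound (e / 2)%:E measurableT _ _ _) _.
- exact/measurable_EFinP.
- by rewrite lee_fin; exact: ltW.
- by apply: aeW => th _ /=; rewrite lee_fin; exact/ltW/T.
by move: (probability_setT mu) => /= ->; rewrite mule1.
Unshelve. all: end_near. Qed.


Lemma Ah_cont (h : X -> R) : continuous h -> (forall x, 0 < h x) ->
  continuous (fun x => ln (Bmu tau mu h x / h x)).
Proof.
move=> ch hp x.
have p : 0 < Bmu tau mu h x / h x by rewrite divr_gt0 // Bmu_pos.
have H : {for x, continuous (fun x => Bmu tau mu h x / h x)}.
  apply: cvgM; first exact: Bmu_cont.
  by apply: cvgV; [rewrite gt_eqF | exact: ch].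
exact: (continuous_comp H (continuous_ln p)).
Qed.

Lemma marg_int (nuhat : probability (@Omega R X Th) R) (f : X -> R) :
  continuous f ->
  (\int[marg nuhat]_x (f x)%:E = \int[nuhat]_z (f z.1)%:E)%E.
Proof.
move=> cf.
have mf : measurable_fun [set: Borel X] (f : Borel X -> R) := @cont_meas _ _ _ cf.
rewrite /marg (@integral_pushforward _ _ _ _ _ fst measurable_fst nuhat setT (EFin \o f)) //.
- exact/measurable_EFinP.
- rewrite preimage_setT; apply: bdd_int.
    exact: (measurableT_comp mf measurable_fst).
  have [M HM] := @cbound _ _ _ compX cf.
  by exists M => z; exact: HM.
Qed.

End main.

Local Open Scope ereal_scope.

Lemma ereal_inf_shift (R : realType) (S : set (\bar R)) (c : R) :
  ereal_inf [set y + c%:E | y in S] = ereal_inf S + c%:E.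
Proof.
apply/le_anti/andP; split; last first.
  apply/ereal_infP => _ [y Sy <-]; apply: leeD2r.
  exact: ereal_inf_lbound.
rewrite -leeBlDr //; apply/ereal_infP => y Sy.
rewrite leeBlDr //; apply: ereal_inf_lbound; by exists y.
Qed.

Local Close Scope ereal_scope.

Section fin.
Context {R : realType} {X Th : pseudoPMetricType R}.
Variables (compX : compact [set: X]) (compTh : compact [set: Th]).
Variables (tau : Th -> X -> X)
  (ctau : continuous (fun p : Th * X => tau p.1 p.2))
  (mu : probability (Borel Th) R)
  (psi : X -> R) (cpsi : continuous psi) (ppsi : forall x, 0 < psi x).

Let clnpsi : continuous (fun x => ln (psi x)).
Proof. move=> x; exact: (continuous_comp (cpsi x) (continuous_ln (ppsi x))). Qed.

Lemma marg_add (nuhat : probability (@Omega R X Th) R) (f g : X -> R) :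
  continuous f -> continuous g ->
  (\int[marg nuhat]_x (f x + g x)%:E =
   \int[marg nuhat]_x (f x)%:E + \int[marg nuhat]_x (g x)%:E)%E.
Proof.
move=> cf cg.
have cfg : continuous (fun x => f x + g x).
  by move=> x; apply: cvgD; [exact: cf | exact: cg].
rewrite !(marg_int compX) //.
have ifst : forall k : X -> R, continuous k ->
    nuhat.-integrable setT (EFin \o (fun z : @Omega R X Th => k z.1)).
  move=> k ck; apply: bdd_int.
    exact: (measurableT_comp (@cont_meas _ _ _ ck) measurable_fst).
  have [M HM] := @cbound _ _ _ compX ck.
  by exists M => z; exact: HM.
exact: (integralD_EFin measurableT (ifst _ cf) (ifst _ cg)).
Qed.


Lemma pw (B gx p : R) : 0 < B -> 0 < gx -> 0 < p ->
  ln (B / gx) = ln (B / (gx * p)) + ln p.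
Proof.
move=> B0 g0 p0; rewrite -lnM ?posrE ?divr_gt0 ?mulr_gt0 //.
congr ln; field; by rewrite !gt_eqF.
Qed.

Lemma key_g (nuhat : probability (@Omega R X Th) R) (g : X -> R) :
  continuous g -> (forall x, 0 < g x) ->
  (\int[marg nuhat]_x (ln (Bq tau mu psi g x / g x))%:E =
   \int[marg nuhat]_x (ln (Bmu tau mu (fun y => g y * psi y) x /
                                (g x * psi x)))%:E +
   \int[marg nuhat]_x (ln (psi x))%:E)%E.
Proof.
move=> cg gp.
have ck : continuous (fun y => g y * psi y).
  by move=> x; apply: cvgM; [exact: cg | exact: cpsi].
have kp : forall y, 0 < g y * psi y by move=> y; rewrite mulr_gt0.
rewrite -marg_add //; last exact: (@Ah_cont _ _ _ compTh tau ctau mu _ ck kp).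
congr (integral _ _ _); apply/funext => x; congr EFin.
rewrite /Bq -/(Bmu tau mu (fun y => g y * psi y) x).
by apply: pw => //; exact: (@Bmu_pos _ _ _ compTh tau ctau mu _ _ ck kp).
Qed.


Lemma cfin (nuhat : probability (@Omega R X Th) R) :
  (\int[marg nuhat]_x (ln (psi x))%:E)%E \is a fin_num.
Proof.
rewrite (marg_int compX) //; apply: integrable_fin_num.
  exact: measurableT.
apply: (@bdd_int _ _ _ _ (fun z : @Omega R X Th => ln (psi z.1))).
  exact: (measurableT_comp (@cont_meas _ _ _ clnpsi) measurable_fst).
have [M HM] := @cbound _ _ _ compX clnpsi.
by exists M => z; exact: HM.
Qed.

Lemma key (nuhat : probability (@Omega R X Th) R) :
  inf_ln (Bq tau mu psi) nuhat =
  (hv tau mu nuhat + \int[marg nuhat]_x (ln (psi x))%:E)%E.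
Proof.
rewrite -(fineK (cfin nuhat)) /hv /inf_ln -ereal_inf_shift; congr ereal_inf.
apply/seteqP; split.
- move=> _ [g [cg gp] <-] /=.
  have ck : continuous (fun y => g y * psi y).
    by move=> x; apply: cvgM; [exact: cg | exact: cpsi].
  have kp : forall y, 0 < g y * psi y by move=> y; rewrite mulr_gt0.
  exists (\int[marg nuhat]_x (ln (Bmu tau mu (fun y => g y * psi y) x /
                                (g x * psi x)))%:E)%E.
    by exists (fun y => g y * psi y).
  by rewrite fineK ?cfin // key_g.
- move=> _ [_ [h [ch hp] <-] <-] /=.
  have E : (fun y => h y / psi y * psi y) = h.
    by apply/funext => y; rewrite divfK // gt_eqF.
  have cg : continuous (fun y => h y / psi y).
    move=> x; apply: cvgM; first exact: ch.
    by apply: cvgV; [rewrite gt_eqF | exact: cpsi].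
  have gp : forall y, 0 < h y / psi y by move=> y; rewrite divr_gt0.
  exists (fun y => h y / psi y); first by split.
  rewrite key_g // fineK ?cfin //; congr (_ + _)%E.
  congr (integral _ _ _); apply/funext => x; by rewrite E divfK // gt_eqF.
Qed.

End fin.

Theorem mainTheorem6 (R : realType) (X Th : pseudoPMetricType R)
  (hausX : hausdorff_space X) (compX : compact [set: X])
  (hausTh : hausdorff_space Th) (compTh : compact [set: Th])
  (tau : Th -> X -> X)
  (ctau : continuous (fun p : Th * X => tau p.1 p.2))
  (mu : probability (Borel Th) R)
  (psi : X -> R) (cpsi : continuous psi) (ppsi : forall x, 0 < psi x) :
  pressure tau mu psi =
  ereal_sup [set (hv tau mu nuhat + \int[marg nuhat]_x (ln (psi x))%:E)%E
            | nuhat in holonomic tau].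
Proof.
rewrite /pressure; congr ereal_sup; apply: eq_imagel => nuhat _.
exact: (@key R X Th compX compTh tau ctau mu psi cpsi ppsi nuhat).
Qed.
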